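(* Let $G=(V,E)$ be a graph with a string representation $\varphi$, let $D\subseteq V$, suppose the robber is confined to $D$, and let $\pi$ be a shortest curve relative to $D$ in $\varphi$. Then five cops can prevent the robber from entering any vertex whose string intersects $\pi$, after a finite number of initial moves.
   Context: A string representation of $G$ assigns to each vertex $v$ a bounded curve $\varphi(v)\subseteq\mathbb{R}^2$ (continuous image of $[0,1]$) so that distinct $u,v$ are adjacent iff $\varphi(u)\cap\varphi(v)\ne\emptyset$. A path $P$ in $G$ is a shortest path relative to $D$ if it is a shortest path (between its endpoints) in $G[P\cup D]$. If $P$ is a shortest path relative to $D$ from $u$ to $v$, and $A\in\varphi(u)$, $B\in\varphi(v)$ are points, a curve $\pi\subseteq\bigcup_{p\in P}\varphi(p)$ from $A$ to $B$ such that for every $p\in P$ the set $\pi\cap\varphi(p)$ is connected, and these intersections appear along $\pi$ in the same order as the vertices of $P$, is a shortest curve of $P$ relative to $D$; a shortest curve relative to $D$ is a shortest curve of some shortest path relative to $D$. Game of cops and robber: cops are placed, then the robber; players alternate starting with cops; each piece stays or moves to an adjacent vertex; capture happens when a cop occupies the robber's vertex. The robber is confined to $D$ if the cops' strategy ensures he is immediately captured upon moving to any vertex outside $D$. *)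

(* Defs.v *)
From HB Require Import structures.
From mathcomp Require Import all_boot all_order all_algebra.
From mathcomp Require Import classical_sets boolp reals topology normedtype set_interval.
Set Implicit Arguments. Unset Strict Implicit. Unset Printing Implicit Defensive.
Import Order.TTheory GRing.Theory Num.Theory numFieldNormedType.Exports.
Local Open Scope classical_set_scope.
Local Open Scope ring_scope.

Definition curve_param {R : realType} (f : R -> R * R) (S : set (R * R)) : Prop :=
  {within `[(0:R), 1]%classic, continuous f} /\ f @` `[(0:R), 1]%classic = S.

Definition is_curve {R : realType} (S : set (R * R)) : Prop :=
  exists f, curve_param f S.

(* phi is a string representation (of the graph it induces):
   every phi v is a curve. *)
Definition string_rep {R : realType} {V : finType} (phi : V -> set (R * R)) : Prop :=
  forall v, is_curve (phi v).

Definition sadj {R : realType} {V : finType} (phi : V -> set (R * R)) (u v : V) : Prop :=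
  u <> v /\ (phi u `&` phi v) !=set0.

Definition walk_in {R : realType} {V : finType} (phi : V -> set (R * R))
    (S : set V) (q : seq V) : Prop :=
  q <> [::] /\ (forall x, x \in q -> S x) /\
  (forall x y, (x, y) \in zip q (behead q) -> sadj phi x y).

Definition shortest_path_rel {R : realType} {V : finType} (phi : V -> set (R * R))
    (D : set V) (P : seq V) (u v : V) : Prop :=
  let S := (fun x => x \in P \/ D x) in
  walk_in phi S P /\ head u P = u /\ last u P = v /\
  (forall q, walk_in phi S q -> head u q = u -> last u q = v ->
     (size P <= size q)%N).

(* pi is a shortest curve of P relative to D (P a shortest path relative to D
   from u to v): a curve from A in phi u to B in phi v, contained in the union
   of the strings of P, meeting each string of P in a connected set, these
   intersections appearing along pi in the order of P. *)
Definition shortest_curve_of {R : realType} {V : finType} (phi : V -> set (R * R))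
    (D : set V) (P : seq V) (pi : set (R * R)) : Prop :=
  exists u v, shortest_path_rel phi D P u v /\
  exists f : R -> R * R,
    curve_param f pi /\ phi u (f 0) /\ phi v (f 1) /\
    (forall x, pi x -> exists p, p \in P /\ phi p x) /\
    (forall p, p \in P -> connected (pi `&` phi p)) /\
    (forall (i j : nat), (i < j)%N -> (j < size P)%N ->
       forall s t, s \in `[0, 1] -> t \in `[0, 1] ->
       phi (nth u P i) (f s) -> ~ phi (nth u P j) (f s) ->
       phi (nth u P j) (f t) -> ~ phi (nth u P i) (f t) -> s < t).

Definition shortest_curve_rel {R : realType} {V : finType} (phi : V -> set (R * R))
    (D : set V) (pi : set (R * R)) : Prop :=
  exists P, shortest_curve_of phi D P pi.

(* A robber walk confined to D: positions r 0, r 1, ... (r t is the robber's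
   position after his t-th move, r 0 his placement); he always stays in D
   (being confined to D) and each move stays put or goes to an adjacent vertex. *)
Definition robber_walk {R : realType} {V : finType} (phi : V -> set (R * R))
    (D : set V) (r : nat -> V) : Prop :=
  forall t, D (r t) /\ (r t.+1 = r t \/ sadj phi (r t) (r t.+1)).

(* A strategy of k cops: initial placement c0, and a function giving the
   cops' positions after seeing the robber's history [r 0; ...; r (t-1)].
   cop_pos c0 sigma r t = positions of the cops at time t, i.e. before the
   robber's t-th position is answered: time 0 = placement; time t+1 = after
   the cops answered r t. *)
Definition cop_pos {V : finType} {k : nat} (c0 : 'I_k -> V)
    (sigma : seq V -> 'I_k -> V) (r : nat -> V) (t : nat) : 'I_k -> V :=
  if t is _.+1 then sigma (mkseq r t) else c0.

Definition legal_cops {R : realType} {V : finType} (phi : V -> set (R * R))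
    (D : set V) {k : nat} (c0 : 'I_k -> V) (sigma : seq V -> 'I_k -> V) : Prop :=
  forall r, robber_walk phi D r -> forall t (i : 'I_k),
    cop_pos c0 sigma r t.+1 i = cop_pos c0 sigma r t i \/
    sadj phi (cop_pos c0 sigma r t i) (cop_pos c0 sigma r t.+1 i).

(* k cops can prevent the confined robber from entering any vertex of W after
   finitely many initial moves: there is a legal strategy such that for every
   robber walk (in D) there is a time T after which, whenever the robber is at
   a vertex of W, he is captured by the cops' next move. *)
Definition cops_guard {R : realType} {V : finType} (phi : V -> set (R * R))
    (D : set V) (k : nat) (W : set V) : Prop :=
  exists (c0 : 'I_k -> V) (sigma : seq V -> 'I_k -> V),
    legal_cops phi D c0 sigma /\
    forall r, robber_walk phi D r -> exists T : nat, forall t : nat, (T <= t)%N ->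
      W (r t) -> exists i : 'I_k, cop_pos c0 sigma r t.+1 i = r t.

(* Main.v *)
Require Import Defs.
From HB Require Import structures.
From mathcomp Require Import all_boot all_order all_algebra.
From mathcomp Require Import classical_sets boolp reals topology normedtype set_interval.
From mathcomp Require Import zify.
Local Open Scope classical_set_scope.

Set Implicit Arguments. Unset Strict Implicit. Unset Printing Implicit Defensive.

Section Aux.
Variables (R : realType) (V : finType) (phi : V -> set (R * R)).

Definition Rb : rel V := fun x y => `[< sadj phi x y >].

Lemma sadj_sym x y : sadj phi x y -> sadj phi y x.
Proof. by move=> [H1 H2]; split; [move=> E; apply: H1 | rewrite setIC]. Qed.

Lemma zip_path (a : V) q0 :
  (forall x y, (x, y) \in zip (a :: q0) q0 -> sadj phi x y) <-> path Rb a q0.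
Proof.
elim: q0 a => [|b q1 IH] a /=; first by split.
split.
- move=> H; apply/andP; split.
    by apply/asboolP; apply: H; rewrite inE eqxx.
  by apply/IH => x y Hxy; apply: H; rewrite inE Hxy orbT.
- move=> /andP[/asboolP Hab Hp] x y; rewrite inE => /orP[/eqP [-> ->] //|].
  by move/IH: Hp; apply.
Qed.

Lemma walkE (S : set V) a q0 :
  walk_in phi S (a :: q0) <-> ((forall x, x \in a :: q0 -> S x) /\ path Rb a q0).
Proof.
rewrite /walk_in; split.
- by move=> [_ [H1 H2]]; split => //; apply/zip_path.
- by move=> [H1 H2]; split => //; split => //; apply/zip_path.
Qed.

Lemma last_take_nth (u : V) P0 i : (i <= size P0)%N ->
  last u (take i P0) = nth u (u :: P0) i.
Proof.
elim: P0 u i => [|b P1 IH] u [|i] //= Hi.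
rewrite IH //; exact: set_nth_default.
Qed.

End Aux.

Definition step (b c : nat) := if (b < c)%N then b.+1 else if (c < b)%N then b.-1 else b.

Lemma align_ev (G Bs : nat -> nat) L : (forall t, (G t <= L)%N) ->
  (forall t, (G t.+1 <= (G t).+1)%N /\ (G t <= (G t.+1).+1)%N) -> Bs 0 = 0 ->
  (forall t, Bs t.+1 = step (Bs t) (G t)) ->
  exists T, forall t, (T <= t)%N -> Bs t.+1 = G t.
Proof.
move=> HL HG H0 HS.
have inv : forall t, (Bs t.+1 <= G t)%N.
  elim=> [|t IH]; first by rewrite HS H0 /step; case: ltnP.
  rewrite HS /step; move: (HG t) (IH) => [A1 A2] IH'.
  case: (ltnP (Bs t.+1) (G t.+1)) => Ha; case: (ltnP (G t.+1) (Bs t.+1)) => Hb; lia.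
have pers : forall t, Bs t.+1 = G t -> Bs t.+2 = G t.+1.
  move=> t E; rewrite HS E /step; move: (HG t) => [A1 A2].
  case: (ltnP (G t) (G t.+1)) => Ha; case: (ltnP (G t.+1) (G t)) => Hb; lia.
have prog : forall n, (exists2 t, (t <= n)%N & Bs t.+1 = G t) \/ (n < Bs n.+1)%N.
  elim=> [|n IH].
    case E: (Bs 1 == G 0); first by left; exists 0 => //; apply/eqP.
    right; move: (inv 0) E; rewrite HS H0 /step; case: ltnP => //= Ha; lia.
  case: IH => [[t Ht Et]|Hn]; first by left; exists t => //; lia.
  case E0: (Bs n.+1 == G n); first by left; exists n => //; apply/eqP.
  case E: (Bs n.+2 == G n.+1); first by left; exists n.+1 => //; apply/eqP.
  right; move: (inv n) (inv n.+1) E E0 (HG n) Hn; rewrite [Bs n.+2]HS /step.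
  case: (ltnP (Bs n.+1) (G n.+1)) => Ha; case: (ltnP (G n.+1) (Bs n.+1)) => Hb /=; lia.
case: (prog L) => [[T HT ET]|Hn]; last by move: (inv L) (HL L); lia.
exists T; elim=> [|t IH] Ht; first by have E : T = 0 by [lia]; rewrite E in ET.
case: (leqP T t) => H; first by apply: pers; apply: IH.
by have E : T = t.+1 by [lia]; rewrite E in ET.
Qed.

Section Path.
Variables (R : realType) (V : finType) (phi : V -> set (R * R)) (D : set V).
Variables (P : seq V) (u v : V).
Hypothesis Hsp : shortest_path_rel phi D P u v.

Definition SS : set V := fun x => x \in P \/ D x.
Definition len := (size P).-1.

Definition reach (x : V) (n : nat) : Prop := exists q,
  walk_in phi SS q /\ head u q = u /\ last u q = x /\ size q = n.+1.

Lemma P_cons : exists P0, P = u :: P0.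
Proof.
case: Hsp => [[Hne _] [Hh _]]; case: P Hne Hh => [//|a P0] _ /= ->.
by exists P0.
Qed.

Lemma reach_step x y n : reach x n -> SS y -> sadj phi x y -> reach y n.+1.
Proof.
move=> [[|a q0] [Hw [Hh [Hl Hs]]]] Hy Hxy; first by case: Hw.
exists (a :: rcons q0 y); split; last split; [|by []|split].
- move/walkE: Hw => [Hm Hp]; apply/walkE; split.
    move=> z; rewrite -rcons_cons mem_rcons inE => /orP[/eqP -> //|]; exact: Hm.
  by rewrite rcons_path Hp /= -[last a q0]/(last u (a :: q0)) Hl; apply/asboolP.
- by rewrite /= last_rcons.
- by rewrite /= size_rcons; move: Hs => /= [->].
Qed.

Lemma reach_P i : (i <= len)%N -> reach (nth u P i) i.
Proof.
case: P_cons => P0 EP; rewrite /len EP /= => Hi.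
case: Hsp => [Hw _]; rewrite EP in Hw; move/walkE: Hw => [Hm Hp].
exists (u :: take i P0); split; last split; [|by []|split].
- apply/walkE; split.
    move=> z Hz; left; rewrite EP; move: Hz; rewrite !inE => /orP[->//|Hz].
    by rewrite (mem_take Hz) orbT.
  by move: Hp; rewrite -{1}(cat_take_drop i P0) cat_path => /andP[].
- by rewrite /= last_take_nth.
- by rewrite /= size_take; case: ltnP Hi => // H1 H2; congr _.+1; apply/eqP; rewrite eqn_leq H1 H2.
Qed.

Lemma reach_P_ge i m : (i <= len)%N -> reach (nth u P i) m -> (i <= m)%N.
Proof.
case: P_cons => P0 EP; rewrite /len EP /= => Hi.
move=> [[|a q0] [Hw [Hh [Hl Hs]]]]; first by case: Hw.
case: Hsp => [HwP [HhP [HlP Hmin]]]; rewrite EP in HwP HlP.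
move/walkE: HwP => [HmP HpP]. move/walkE: Hw => [Hm Hp].
simpl in Hh; subst a; simpl in Hl.
have Hlt : last u (take i P0) = nth u (u :: P0) i by rewrite last_take_nth.
have := Hmin (u :: (q0 ++ drop i P0)).
have -> : size P = (size P0).+1 by rewrite EP.
rewrite /= size_cat size_drop; move: Hs => /= [Hs]; rewrite Hs.
move=> H; suff: (size P0 < (m + (size P0 - i)).+1)%N by lia.
apply: H => //.
- apply/walkE; split.
    move=> z; rewrite inE mem_cat => /orP[/eqP->|/orP[Hz|Hz]].
    + by apply: Hm; rewrite inE eqxx.
    + by apply: Hm; rewrite inE Hz orbT.
    + by left; rewrite EP inE (mem_drop Hz) orbT.
  rewrite cat_path Hp /=.
  move: HpP; rewrite -{1}(cat_take_drop i P0) cat_path => /andP[_].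
  by rewrite Hlt -Hl.
- rewrite /= last_cat.
  have -> : last u q0 = last u (take i P0) by rewrite Hlt -Hl.
  by rewrite -last_cat cat_take_drop.
Qed.


Definition gpred (x : V) : pred nat := fun n => (n == len) || `[< reach x n >].
Lemma gex x : exists n, gpred x n.
Proof. by exists len; rewrite /gpred eqxx. Qed.
Definition g x := ex_minn (gex x).

Lemma g_min x n : gpred x n -> (g x <= n)%N.
Proof. by rewrite /g; case: ex_minnP => m _ H; apply: H. Qed.

Lemma g_le x : (g x <= len)%N.
Proof. by apply: g_min; rewrite /gpred eqxx. Qed.

Lemma g_holds x : g x = len \/ reach x (g x).
Proof.
rewrite /g; case: ex_minnP => m /orP[/eqP -> _|/asboolP H _]; by [left|right].
Qed.

Lemma g_lip x y : SS x -> SS y -> sadj phi x y -> (g y <= (g x).+1)%N.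
Proof.
move=> Hx Hy Hxy; case: (g_holds x) => [->|H].
  by apply: leq_trans (g_le y) _.
apply: g_min; apply/orP; right; apply/asboolP; exact: reach_step H Hy Hxy.
Qed.

Lemma g_P i : (i <= len)%N -> g (nth u P i) = i.
Proof.
move=> Hi; apply/eqP; rewrite eqn_leq; apply/andP; split.
  by apply: g_min; apply/orP; right; apply/asboolP; exact: reach_P.
case: (g_holds (nth u P i)) => [->//|H]; exact: reach_P_ge H.
Qed.


Lemma P_adj j : (j < len)%N -> sadj phi (nth u P j) (nth u P j.+1).
Proof.
case: P_cons => P0 EP; rewrite /len EP /= => Hj.
case: Hsp => [Hw _]; rewrite EP in Hw; move/walkE: Hw => [_ Hp].
by move/(pathP u): Hp => /(_ j Hj) /asboolP.
Qed.

Definition aligned (b : nat) : 'I_5 -> V :=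
  fun m => nth u P (minn (b + m - 2) len).

Lemma aligned_move b b' m : (b' <= b.+1)%N -> (b <= b'.+1)%N ->
  aligned b' m = aligned b m \/ sadj phi (aligned b m) (aligned b' m).
Proof.
move=> H1 H2; rewrite /aligned.
set j := minn (b + m - 2) len; set j' := minn (b' + m - 2) len.
have : j' = j \/ (j' = j.+1 /\ (j < len)%N) \/ (j = j'.+1 /\ (j' < len)%N).
  rewrite /j /j'; lia.
case=> [->|[[-> Hl]|[-> Hl]]]; [by left|right; exact: P_adj|].
right; apply: sadj_sym; exact: P_adj.
Qed.


Definition capt (s : 'I_5 -> V) (x : V) : pred 'I_5 :=
  fun j => `[< s j = x \/ sadj phi (s j) x >].

Definition upd (s : ('I_5 -> V) * nat) (x : V) : ('I_5 -> V) * nat :=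
  let b' := step s.2 (g x) in
  if [pick j | capt s.1 x j] is Some j then
    ((fun m => if m == j then x else s.1 m), b')
  else (aligned b', b').

Definition st (h : seq V) := foldl upd (aligned 0, 0) h.
Definition sigma (h : seq V) := (st h).1.

Lemma stS (r : nat -> V) t : st (mkseq r t.+1) = upd (st (mkseq r t)) (r t).
Proof. by rewrite /st mkseqS foldl_rcons. Qed.

Lemma cop_posE r t : cop_pos (aligned 0) sigma r t = (st (mkseq r t)).1.
Proof. by case: t. Qed.

Lemma B_step r t : (st (mkseq r t.+1)).2 = step (st (mkseq r t)).2 (g (r t)).
Proof. by rewrite stS /upd; case: pickP. Qed.

Lemma F1 r t : (st (mkseq r t.+1)).1 = aligned (st (mkseq r t.+1)).2 \/
  exists j, (st (mkseq r t.+1)).1 j = r t.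
Proof.
rewrite stS /upd; case: pickP => [j _|_]; first by right; exists j; rewrite /= eqxx.
by left.
Qed.

Lemma F2 r t : (exists j, capt (st (mkseq r t)).1 (r t) j) ->
  exists j, (st (mkseq r t.+1)).1 j = r t.
Proof.
move=> [j Hj]; rewrite stS /upd; case: pickP => [k _|H]; first by exists k; rewrite /= eqxx.
by rewrite H in Hj.
Qed.

Lemma step_near b c : (step b c <= b.+1)%N /\ (b <= (step b c).+1)%N.
Proof. rewrite /step; case: (ltnP b c) => H1; case: (ltnP c b) => H2; lia. Qed.

Lemma aligned_or r : robber_walk phi D r -> forall t,
  (forall j, ~~ capt (st (mkseq r t)).1 (r t) j) ->
  (st (mkseq r t)).1 = aligned (st (mkseq r t)).2.
Proof.
move=> Hr [//|t] Hn.
case: (F1 r t) => [//|[j Hj]].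
have := Hn j; rewrite /capt Hj; case: (Hr t) => _ [E|A].
  by rewrite E => /asboolP []; left.
by move=> /asboolP []; right.
Qed.

Lemma legal : legal_cops phi D (aligned 0) sigma.
Proof.
move=> r Hr t i; rewrite !cop_posE.
set s := st (mkseq r t); rewrite stS -/s /upd.
case: pickP => [j Hj|Hn] /=.
  case: (eqVneq i j) => [->|Hij]; last by left.
  by move/asboolP: Hj => [E|A]; [left; rewrite E|right].
have Ha : s.1 = aligned s.2 by apply: aligned_or => // j; rewrite Hn.
rewrite Ha; case: (step_near s.2 (g (r t))) => A1 A2.
exact: aligned_move.
Qed.

Variable pi : set (R * R).
Hypothesis Hcov : forall x, pi x -> exists p, p \in P /\ phi p x.

Lemma cover x y : (phi x `&` pi) !=set0 -> D x -> D y -> (y = x \/ sadj phi y x) ->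
  exists m : 'I_5, capt (aligned (g y)) x m.
Proof.
move=> [p0 [Hx0 Hpi]] Dx Dy Hyx.
case: (Hcov Hpi) => q [HqP Hq0].
set i := index q P.
have Hs : (i < size P)%N by rewrite /i index_mem.
have Hi : (i <= len)%N by rewrite /len; case: (size P) Hs => // n; rewrite ltnS.
have Eq : nth u P i = q by rewrite nth_index.
have gq : g q = i by rewrite -Eq g_P.
have Hxq : x = q \/ sadj phi q x.
  case: (pselect (x = q)) => [->|Hne]; first by left.
  right; split; first by move=> E; apply: Hne.
  by exists p0.
have Hgx : (g x <= i.+1)%N /\ (i <= (g x).+1)%N.
  case: Hxq => [->|A]; first by rewrite gq.
  rewrite -gq; split; apply: g_lip => //; try (by left); try (by right).
  exact: sadj_sym.
have Hgy : (g y <= (g x).+1)%N /\ (g x <= (g y).+1)%N.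
  case: Hyx => [->|A]; first by [].
  split; apply: g_lip => //; try (by right).
  exact: sadj_sym.
have Hly := g_le y.
have Hm : (i + 2 - g y < 5)%N by lia.
exists (Ordinal Hm); apply/asboolP.
have -> : aligned (g y) (Ordinal Hm) = q.
  rewrite /aligned /= -Eq; congr nth; lia.
by case: Hxq => [->|A]; [left|right].
Qed.

Lemma guard : cops_guard phi D 5 [set v | (phi v `&` pi) !=set0].
Proof.
exists (aligned 0), sigma; split; first exact: legal.
move=> r Hr.
have HG : forall t, (g (r t.+1) <= (g (r t)).+1)%N /\ (g (r t) <= (g (r t.+1)).+1)%N.
  move=> t; case: (Hr t) => Dt [E|A]; first by rewrite E.
  have Dt1 := (Hr t.+1).1.
  split; apply: g_lip => //; try (by right).
  exact: sadj_sym.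
have [T HT] := @align_ev (fun t => g (r t)) (fun t => (st (mkseq r t)).2) len
  (fun t => g_le (r t)) HG erefl (B_step r).
exists T.+1 => t; case: t => [//|t] Ht HW.
rewrite cop_posE; apply: F2.
case: (F1 r t) => [Ha|[j Hj]].
  rewrite Ha HT //; apply: cover => //; first exact: (Hr t.+1).1.
    exact: (Hr t).1.
  by case: (Hr t) => _ [E|A]; [left|right].
by exists j; apply/asboolP; rewrite Hj; case: (Hr t) => _ [E|A]; [left|right].
Qed.

End Path.

Theorem corollary2 (R : realType) (V : finType) (phi : V -> set (R * R))
    (D : set V) (pi : set (R * R)) :
  string_rep phi ->
  shortest_curve_rel phi D pi ->
  cops_guard phi D 5 [set v | (phi v `&` pi) !=set0].
Proof.
move=> _ [P [u [v [Hsp [f [_ [_ [_ [Hcov _]]]]]]]]].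
exact: (guard Hsp Hcov).
Qed.
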